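(* Let $d\ge 1$, $n\in\mathbb{N}$, and let $S$ be simple symmetric random walk on $\mathbb{Z}^d$ started at $0$, with range $R(n)=\{S(0),\ldots,S(n)\}$. For every finite $A\subset\mathbb{Z}^d$, $$p_n(A):=\Pr[R(n)=A]\le\Big(1-\frac{1}{2d}\Big)^{|\partial A|-1}.$$
   Context: Two vertices $z,w\in\mathbb{Z}^d$ are adjacent, $z\sim w$, if their graph distance in $\mathbb{Z}^d$ is $1$; $z\sim B$ means the graph distance from $z$ to the set $B$ is $1$. The inner boundary of $A\subset\mathbb{Z}^d$ is $\partial A=\{z\in A : z\sim \mathbb{Z}^d\setminus A\}$. *)

(* Defs.v *)
From HB Require Import structures.
From mathcomp Require Import all_boot all_order all_algebra.
Set Implicit Arguments. Unset Strict Implicit. Unset Printing Implicit Defensive.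
Import Order.TTheory GRing.Theory Num.Theory.
Local Open Scope ring_scope.

Definition pt (d : nat) := {ffun 'I_d -> int}.

(* A step of the simple random walk: a coordinate and a sign (2d choices). *)
Definition step (d : nat) := ('I_d * bool)%type.

Definition stepv d (s : step d) : pt d :=
  [ffun i => if i == s.1 then (if s.2 then 1 else -1) else 0].

Definition pos d n (w : n.-tuple (step d)) (k : nat) : pt d :=
  [ffun i => \sum_(j < n | (j < k)%N) stepv (tnth w j) i].

Definition range d n (w : n.-tuple (step d)) : seq (pt d) :=
  [seq pos w k | k <- iota 0 n.+1].

Definition same_set (T : eqType) (r A : seq T) : bool :=
  all (fun z => z \in A) r && all (fun z => z \in r) A.

Definition adj d (z w : pt d) : Prop := \sum_(i < d) `|z i - w i| = 1.

Definition in_inner_boundary d (A : seq (pt d)) (z : pt d) : Prop :=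
  z \in A /\ exists w : pt d, adj z w /\ w \notin A.

(* p_n(A) = P[R(n) = A] for simple symmetric random walk: each of the
   (2d)^n step sequences has probability (2d)^-n. *)
Definition pn d n (A : seq (pt d)) : rat :=
  (#|[set w : n.-tuple (step d) | same_set (range w) A]|%:R / ((2 * d) ^ n)%N%:R).

(* Main.v *)
Require Import Defs.
From HB Require Import structures.
From mathcomp Require Import all_boot all_order all_algebra.
From Stdlib Require Import Ring ArithRing.
Import Order.TTheory GRing.Theory Num.Theory.
Set Implicit Arguments. Unset Strict Implicit. Unset Printing Implicit Defensive.

Lemma card_tuple_cons (T : finType) n (Q : seq T -> bool) :
  #|[set w : n.+1.-tuple T | Q w]| =
  \sum_(a : T) #|[set t : n.-tuple T | Q (a :: t)]|.
Proof.
rewrite -sum1_card; symmetry.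
under eq_bigr => a _ do rewrite -sum1_card.
rewrite pair_big_dep /=.
rewrite (reindex (fun p : T * n.-tuple T => [tuple of p.1 :: p.2])) /=.
  by apply: eq_bigl => -[a t]; rewrite !inE.
exists (fun w : n.+1.-tuple T => (thead w, [tuple of behead w])).
  move=> [a t] _ /=; rewrite theadE; congr pair; exact: val_inj.
move=> w _ /=; by rewrite -tuple_eta.
Qed.

Definition padd d (x y : pt d) : pt d := [ffun i => x i + y i]%R.

Fixpoint walkpos d (x : pt d) (s : seq (step d)) : seq (pt d) :=
  x :: if s is a :: s' then walkpos (padd x (stepv a)) s' else [::].

Lemma pos0 d n (w : n.-tuple (step d)) : pos w 0 = [ffun=> 0%R].
Proof. apply/ffunP=> i; rewrite !ffunE big_pred0 //. Qed.

Lemma posS d n a (t : n.-tuple (step d)) k :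
  pos [tuple of a :: t] k.+1 = padd (stepv a) (pos t k).
Proof.
apply/ffunP=> i; rewrite [LHS]ffunE [in RHS]ffunE.
rewrite (big_mkcond (fun j : 'I_n.+1 => (j < k.+1)%N)) big_ord_recl /= tnth0.
congr (_ + _)%R. rewrite ffunE (big_mkcond (fun j : 'I_n => (j < k)%N)).
apply: eq_bigr => j _.
by rewrite tnthS /bump /= add1n ltnS.
Qed.

Lemma range_walk d n (w : n.-tuple (step d)) (x : pt d) :
  [seq padd x (pos w k) | k <- iota 0 n.+1] = walkpos x w.
Proof.
elim: n w x => [|n IH] w x.
  rewrite tuple0 /= pos0; congr [:: _]; apply/ffunP=> i; by rewrite !ffunE addr0.
case/tupleP: w => a t /=.
rewrite pos0 -IH; congr (_ :: _).
  apply/ffunP=> i; by rewrite !ffunE addr0.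
rewrite -[_ :: _]/([seq padd x (pos [tuple of a :: t] k) | k <- iota 1 n.+1]).
rewrite (_ : iota 1 n.+1 = map (addn 1) (iota 0 n.+1)); last by rewrite -iotaDl.
rewrite -map_comp; apply: eq_map => k /=.
rewrite add1n posS; apply/ffunP=> i; by rewrite !ffunE addrA.
Qed.

Lemma card_step d : #|{: step d}| = (2 * d)%N.
Proof. by rewrite card_prod card_ord card_bool mulnC. Qed.

Lemma claim d (A : seq (pt d)) (hd : (0 < d)%N) : forall n (x : pt d) (P : seq (pt d)),
  uniq P -> (forall z, z \in P -> exists a, padd z (stepv a) \notin A) ->
  #|[set t : n.-tuple (step d) | all (fun z => z \in A) (walkpos x t)
       && all (fun z => z \in walkpos x t) P]| * (2*d)^(size P) * (2*d).-1
  <= (2*d)^(n.+1) * (2*d).-1^(size P).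
Proof.
set m := (2 * d)%N.
have m1 : (1 < m)%N by rewrite /m -(muln1 2) (leq_mul2l 2 1 d) hd.
elim=> [|n IH] x P uP hP.
  set S := [set _ | _].
  have cS : (#|S| <= 1)%N.
    by apply: leq_trans (max_card _) _; rewrite card_tuple.
  have [S0|] := eqVneq #|S| 0%N; first by rewrite S0.
  rewrite -lt0n => /card_gt0P [t]; rewrite inE => /andP [_ /allP allP].
  have t0 : val t = [::] by apply: size0nil; rewrite size_tuple.
  have sP : (size P <= 1)%N.
    apply: (@leq_trans (size [:: x])); last by [].
    apply: uniq_leq_size => // z zP; have := allP z zP; by rewrite t0.
  case: (size P) sP => [|[|//]] _.
    rewrite !expn0 !muln1 expn1; apply: leq_trans (leq_pred m).
    by rewrite -{2}(mul1n m.-1) leq_mul2r cS orbT.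
  rewrite !expn1 -mulnA; by rewrite -{2}(mul1n (m * m.-1)) leq_mul2r cS orbT.
rewrite (@card_tuple_cons _ n (fun s => all (fun z => z \in A) (walkpos x s)
       && all (fun z => z \in walkpos x s) P)) !big_distrl /=.
have walkA : forall y (s : seq (step d)), y \notin A ->
    all (fun z => z \in A) (walkpos y s) = false.
  by move=> y [|? ?] /= yA; rewrite (negbTE yA).
have [xP|xP] := boolP (x \in P).
  have [a0 ha0] := hP x xP.
  set P' := rem x P.
  have uP' : uniq P' := rem_uniq x uP.
  have sP : size P = (size P').+1.
    rewrite /P' size_rem // prednK // lt0n size_eq0; apply/eqP => P0.
    by rewrite P0 in xP.
  have hP' : forall z, z \in P' -> exists a, padd z (stepv a) \notin A.
    by move=> z /mem_rem /hP.
  rewrite (bigD1 a0) //=.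
  rewrite (_ : [set t : n.-tuple (step d) | _] = set0); last first.
    by apply/setP=> t; rewrite !inE walkA // andbF.
  rewrite cards0 !mul0n add0n.
  apply: (@leq_trans (\sum_(i | i != a0) m * (m ^ n.+1 * m.-1 ^ size P'))).
    apply: leq_sum => a _.
    apply: (@leq_trans (#|[set t : n.-tuple (step d) |
       all (fun z => z \in A) (walkpos (padd x (stepv a)) t)
       && all (fun z => z \in walkpos (padd x (stepv a)) t) P']| * m ^ size P * m.-1)).
      apply: leq_mul => //; apply: leq_mul => //.
      apply/subset_leq_card/subsetP => t; rewrite !inE => /andP [/andP [_ hA] /allP hv].
      rewrite hA /=; apply/allP => z; rewrite mem_rem_uniq // => /andP [zx zP].
      by have := hv z zP; rewrite inE (negbTE zx).
    rewrite sP expnS mulnCA -mulnA; apply: leq_mul => //; exact: IH.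
  rewrite sum_nat_const cardC1 card_step sP -/m.
  rewrite [m ^ n.+2]expnS [m.-1 ^ (size P').+1]expnS.
  by rewrite mulnA [m.-1 * m]mulnC -!mulnA [m.-1 * (_ * _)]mulnCA.
apply: (@leq_trans (\sum_(i : step d) (m ^ n.+1 * m.-1 ^ size P))).
  apply: leq_sum => a _.
  apply: leq_trans (IH (padd x (stepv a)) P uP hP).
  apply: leq_mul => //; apply: leq_mul => //.
  apply/subset_leq_card/subsetP => t; rewrite !inE => /andP [/andP [_ hA] /allP hv].
  rewrite hA /=; apply/allP => z zP.
  have zx : z != x by apply: contraNneq xP => <-.
  by have := hv z zP; rewrite inE (negbTE zx).
rewrite sum_nat_const card_step -/m.
by rewrite [m ^ n.+2]expnS mulnA.
Qed.

Local Open Scope ring_scope.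

Lemma adj_step d (z w : pt d) : adj z w -> exists a, w = padd z (stepv a).
Proof.
rewrite /adj => h.
have [i hi] : exists i, z i != w i.
  case: (pickP (fun i => z i != w i)) => [i hi|H]; first by exists i.
  move: h; rewrite big1 // => j _; have := H j; move/negbFE/eqP => ->.
  by rewrite subrr normr0.
rewrite (bigD1 i) //= in h.
set u := `|z i - w i| in h; set r := (\sum_(j | j != i) _) in h.
have u1 : 1 <= u by rewrite /u -gtz0_ge1 normr_gt0 subr_eq0.
have r0 : 0 <= r by apply: sumr_ge0 => j _; exact: normr_ge0.
have rE : r = 1 - u by rewrite -h [u + r]addrC addrK.
have r00 : r = 0 by apply/le_anti; rewrite r0 andbT rE subr_le0.
have uE : u = 1 by move: h; rewrite r00 addr0.
have hj : forall j, j != i -> w j = z j.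
  move=> j ji; have := psumr_eq0P (fun j _ => normr_ge0 (z j - w j)) r00 ji.
  by move/eqP; rewrite normr_eq0 subr_eq0 => /eqP.
have he : `|w i - z i| == 1 by rewrite distrC -/u uE.
exists (i, w i - z i == 1); apply/ffunP => j; rewrite !ffunE /=.
case: (eqVneq j i) => [->|ji]; last by rewrite hj // addr0.
case: eqP => [e1|ne].
  by apply/eqP; rewrite addrC -subr_eq e1.
move: he; rewrite eqr_norml ler01 andbT => /orP [/eqP e1|/eqP e1]; first by [].
by apply/eqP; rewrite addrC -subr_eq e1.
Qed.

Unset Implicit Arguments. Set Strict Implicit.

Theorem mainTheorem2 (d n : nat) (hd : (1 <= d)%N) (A : seq (pt d))
  (B : seq (pt d)) (hB : uniq B)
  (hBA : forall z, z \in B <-> in_inner_boundary A z) :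
  pn n A <= (1 - ((2 * d)%N%:R)^-1 : rat) ^ (Posz (size B) - 1).
Proof.
rewrite /pn.
set N := #|[set w : n.-tuple (step d) | same_set (range w) A]|.
set m := (2 * d)%N.
have m1 : (1 < m)%N by rewrite /m -(muln1 2%N) (leq_mul2l 2%N 1%N d) hd.
have hP : forall z, z \in B -> exists a, padd z (stepv a) \notin A.
  move=> z /hBA [_ [w [hw wA]]]; have [a wE] := adj_step hw.
  by exists a; rewrite -wE.
have hN : (N * m ^ (size B) * m.-1 <= m ^ n.+1 * m.-1 ^ (size B))%N.
  apply: leq_trans (claim hd n [ffun=> 0] hB hP).
  apply: leq_mul => //; apply: leq_mul => //.
  apply/subset_leq_card/subsetP => w; rewrite !inE => /andP [h1 h2].
  have -> : walkpos [ffun=> 0] w = range w.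
    rewrite -range_walk /range; apply: eq_map => k.
    by apply/ffunP => i; rewrite !ffunE add0r.
  rewrite h1 /=; apply/allP => z zB; have [zA _] := (hBA z).1 zB.
  exact: (allP h2) z zA.
have m0 : (0 < m)%N by apply: ltnW.
have mR : (m%:R : rat) = (m.-1)%:R + 1 by rewrite natr1 prednK.
have qE : (1 - (m%:R)^-1 : rat) = (m.-1)%:R / m%:R.
  have mn0 : (m%:R : rat) != 0 by rewrite pnatr_eq0 -lt0n.
  have mR2 : (m.-1%:R : rat) = m%:R - 1 by rewrite mR addrK.
  by rewrite mR2 mulrBl divff // mul1r.
have mpos : (0 : rat) < m%:R by rewrite ltr0n.
have m1pos : (0 : rat) < (m.-1)%:R by rewrite ltr0n -ltnS prednK.
have mnpos : (0 : rat) < (m ^ n)%N%:R by rewrite ltr0n expn_gt0 m0.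
rewrite qE ler_pdivrMr //.
case hk: (size B) hN => [|k] hN.
  rewrite sub0r exprN1 invf_div mulrAC ler_pdivlMr // -!natrM ler_nat.
  by move: hN; rewrite !expn0 !muln1 expnS.
rewrite (_ : Posz k.+1 - 1 = k); last by rewrite -addn1 PoszD addrK.
rewrite -[_ ^ Posz k]/(_ ^+ k) expr_div_n mulrAC ler_pdivlMr ?exprn_gt0 //.
rewrite -!natrX -!natrM ler_nat.
rewrite -(@leq_pmul2r (m * m.-1)); last by rewrite muln_gt0 m0 -ltnS prednK.
move: hN; rewrite !expnS.
have e1 : (N * m ^ k * (m * m.-1) = N * (m * m ^ k) * m.-1)%N.
  by rewrite -!multE; ring.
have e2 : (m.-1 ^ k * m ^ n * (m * m.-1) = m * m ^ n * (m.-1 * m.-1 ^ k))%N.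
  by rewrite -!multE; ring.
by rewrite e1 e2.
Qed.
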